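(* Let $G$ be a finite simple $P_4$-free graph (i.e. $G$ has no induced subgraph isomorphic to the path on four vertices) with $n$ vertices, and let $D$ be a dominating set of $G$ of minimum cardinality $\gamma(G)$. Then $$n-\gamma(G)\le \mathcal{C}_D(G)\le 2n-\gamma(G).$$
   Context: A set $D\subseteq V(G)$ is a dominating set of $G$ if every vertex of $V(G)\setminus D$ has a neighbor in $D$; $\gamma(G)$ is the minimum cardinality of a dominating set. For $D\subseteq V(G)$, $\mathcal{C}_D(G)=\sum_{u\in D}\deg_G(u)$. *)

(* Defs.v *)
From mathcomp Require Import all_boot all_order.
Set Implicit Arguments. Unset Strict Implicit. Unset Printing Implicit Defensive.

Definition simple_graph (T : finType) (e : rel T) : Prop :=
  symmetric e /\ irreflexive e.

Definition P4_free (T : finType) (e : rel T) : Prop :=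
  forall a b c d : T,
    [&& a != b, a != c, a != d, b != c, b != d & c != d] ->
    ~ [&& e a b, e b c, e c d, ~~ e a c, ~~ e b d & ~~ e a d].

Definition nbhd (T : finType) (e : rel T) (u : T) : {set T} := [set v | e u v].
Definition deg (T : finType) (e : rel T) (u : T) : nat := #|nbhd e u|.

Definition dominating (T : finType) (e : rel T) (D : {set T}) : bool :=
  [forall v, (v \notin D) ==> [exists u in D, e v u]].

Lemma dominating_setT (T : finType) (e : rel T) : dominating e [set: T].
Proof. by apply/forallP => v; rewrite in_setT. Qed.

Definition gamma (T : finType) (e : rel T) : nat :=
  #|[arg min_(D < [set: T] | dominating e D) #|D|]|.

Definition CD (T : finType) (e : rel T) (D : {set T}) : nat :=
  \sum_(u in D) deg e u.

(* Main.v *)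
Require Import Defs.
From mathcomp Require Import all_boot all_order zify.

Lemma gamma_le (T : finType) (e : rel T) (D : {set T}) : dominating e D -> gamma e <= #|D|.
Proof.
move=> hD; rewrite /gamma.
case: arg_minnP; first exact: dominating_setT.
by move=> A _ /(_ D hD).
Qed.

Section S.
Variables (T : finType) (e : rel T).
Hypothesis sym : symmetric e.
Hypothesis irr : irreflexive e.
Hypothesis p4 : P4_free e.

Lemma chain v a b p q : e v a -> e v b -> e a p -> ~~ e v p -> p != v ->
  ~~ e b p -> e b q -> ~~ e v q -> q != v -> ~~ e a q -> False.
Proof.
move=> va vb ap vp pv bp bq vq qv aq.
have nv x y : e x y -> x != y by apply: contraTneq => ->; rewrite irr.
have ab : a != b by apply: contraNneq bp => <-.
have pq : p != q by apply: contraNneq aq => <-.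
have pa : p != a by rewrite eq_sym; apply: nv.
have qb : q != b by rewrite eq_sym; apply: nv.
have pb : p != b by apply: contraNneq vp => ->.
have qa : q != a by apply: contraNneq vq => ->.
have va' : v != a by apply: nv.
have vb' : v != b by apply: nv.
case ab': (e a b).
  case pq': (e p q).
    apply: (p4 v a p q).
      by rewrite va' eq_sym pv eq_sym qv eq_sym pa eq_sym qa pq.
    by rewrite va ap pq' vp aq vq.
  apply: (p4 p a b q).
    by rewrite pa pb pq ab eq_sym qa eq_sym qb.
  by rewrite sym ap ab' bq sym bp aq pq'.
apply: (p4 p a v b).
  by rewrite pa pv pb eq_sym va' ab vb'.
by rewrite sym ap sym va vb sym vp ab' sym bp.
Qed.

Definition far v a := [set p | e a p && ~~ e v p && (p != v)].

Lemma key (D : {set T}) v : dominating e D -> #|D| = gamma e ->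
  #|[set u in D | (u == v) || e v u]| <= 2.
Proof.
move=> hD hmin.
set S := [set u in D | (u == v) || e v u].
rewrite leqNgt; apply/negP => S3.
set B := [set u in D | e v u].
have : B != set0.
  apply/set0Pn.
  have : 0 < #|S :\ v| by rewrite (cardsD1 v S) in S3; lia.
  rewrite card_gt0 => /set0Pn [x]; rewrite !inE => /and3P [xv xD].
  by rewrite (negbTE xv) /= => vx; exists x; rewrite inE xD vx.
case/set0Pn => a0 a0B.
pose w := [arg max_(a > a0 in B) #|far v a|].
have [wB wmax] : w \in B /\ forall d, d \in B -> #|far v d| <= #|far v w|.
  by rewrite /w; case: arg_maxnP.
have wfar d p : d \in B -> e d p -> ~~ e v p -> p != v -> e w p.
  move=> dB dp vp pv; apply: contraT => wp.
  have : #|far v w| < #|far v d|.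
    apply: proper_card; apply/properP; split.
      apply/subsetP => q; rewrite !inE => /andP [/andP [wq vq] qv].
      rewrite vq qv andbT; apply: contraT => dq.
      move: dB wB; rewrite !inE => /andP [_ vd] /andP [_ vw].
      by rewrite andbT in dq; case: (@chain v d w p q vd vw dp vp pv wp wq vq qv dq).
    by exists p; rewrite !inE ?dp ?vp ?pv ?(negbTE wp).
  by rewrite ltnNge wmax.
set D' := (D :\: S) :|: [set v; w].
have domD' : dominating e D'.
  apply/forallP => u; apply/implyP; rewrite !inE negb_or => /andP [uDS].
  rewrite negb_or => /andP [uv uw].
  have vD' : v \in D' by rewrite /D' !inE eqxx orbT.
  have wD' : w \in D' by rewrite /D' !inE eqxx !orbT.
  case uD: (u \in D).
    move: uDS; rewrite uD andbT negbK /= (negbTE uv) /= => vu.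
    by apply/existsP; exists v; rewrite vD' sym.
  move/forallP: hD => /(_ u) /implyP; rewrite uD => /(_ isT) /existsP [d /andP [dD ud]].
  case dS: (d \in S); last first.
    by apply/existsP; exists d; rewrite ud andbT in_setU in_setD dS dD.
  move: dS; rewrite inE dD /= => /orP [/eqP dv|vd].
    by apply/existsP; exists v; rewrite vD' -dv ud.
  case uv': (e u v); first by apply/existsP; exists v; rewrite vD' uv'.
  apply/existsP; exists w; rewrite wD' /= sym.
  apply: (wfar d u).
  - by rewrite inE dD.
  - by rewrite sym.
  - by rewrite sym uv'.
  - done.
have g1 : gamma e <= #|D'| by apply: gamma_le.
have g2 : #|D'| <= #|D :\: S| + 2.
  rewrite /D' cardsU; apply: leq_trans (leq_subr _ _) _.
  by rewrite leq_add2l cards2; case: (_ == _).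
have SD : S \subset D by apply/subsetP => x; rewrite inE => /andP [].
have g3 : #|D :\: S| = #|D| - #|S| by rewrite cardsD (setIidPr SD).
have g4 := subset_leq_card SD.
clearbody S D' w B.
lia.
Qed.

End S.

Lemma card_sumb (T : finType) (A : {set T}) : #|A| = \sum_v (v \in A : nat).
Proof. by rewrite -sum1_card big_mkcond /=; apply: eq_bigr => v _; case: (v \in A). Qed.

Lemma CD_swap (T : finType) (e : rel T) (D : {set T}) : symmetric e ->
  CD e D = \sum_v #|[set u in D | e v u]|.
Proof.
move=> sym; rewrite /CD /deg.
transitivity (\sum_(u in D) \sum_v (e u v : nat)).
  by apply: eq_bigr => u _; rewrite card_sumb; apply: eq_bigr => v _; rewrite inE.
rewrite exchange_big /=; apply: eq_bigr => v _.
rewrite card_sumb big_mkcond /=; apply: eq_bigr => u _.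
by rewrite inE sym; case: (u \in D).
Qed.

Theorem mainTheorem5 (T : finType) (e : rel T) (D : {set T}) :
  simple_graph e -> P4_free e ->
  dominating e D -> #|D| = gamma e ->
  #|T| - gamma e <= CD e D <= 2 * #|T| - gamma e.
Proof.
move=> [sym irr] p4 hD hmin; rewrite -hmin CD_swap //.
apply/andP; split.
  have -> : #|T| - #|D| = #|~: D| by rewrite -(cardsC D) addKn.
  rewrite card_sumb; apply: leq_sum => v _.
  rewrite inE; case vD: (v \in D) => //=.
  move/forallP: hD => /(_ v); rewrite vD /= => /existsP [u /andP [uD vu]].
  by rewrite card_gt0; apply/set0Pn; exists u; rewrite inE uD vu.
suff : \sum_v #|[set u in D | e v u]| + #|D| <= 2 * #|T| by lia.
rewrite card_sumb -big_split /= -sum1_card big_distrr /= muln1.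
apply: leq_sum => v _.
have := @key T e sym irr p4 D v hD hmin.
rewrite (cardsD1 v [set u in D | (u == v) || e v u]) inE eqxx /=.
have -> : [set u in D | (u == v) || e v u] :\ v = [set u in D | e v u].
  apply/setP => u; rewrite !inE.
  case: (eqVneq u v) => [->|]; first by rewrite irr andbF.
  by [].
by rewrite andbT addnC.
Qed.
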